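(* Let $(f,g),(f',g')\in\Theta$, where the unembedding matrix $L=(g(y_1)\cdots g(y_k))\in\mathbb R^{m\times k}$ has rank $m$, and let $h:\mathcal X\to\Delta^{C-1}$, $C\ge2$, be a concept that is linearly encoded in $f$ with weight matrix $W\in\mathbb R^{m\times C}$ and bias $b\in\mathbb R^C$. Let $A\in\mathbb R^{k\times C}$ be any matrix with $W=LA$. Then $$\inf_{W'\in\mathbb R^{m'\times C},\,b'\in\mathbb R^C}\ \mathbb E_{x\sim p_x}\Big[\mathrm{KL}\big(p_h(\cdot\mid x)\,\big\|\,\mathrm{softmax}(W'^\top f'(x)+b')\big)\Big]\ \le\ \frac12\|A\|_{\mathrm{op}}^2\,d_{\mathrm{logit}}^2(p_{f,g},p_{f',g'}),$$ where $m'$ is the representation dimension of $f'$ and $\|\cdot\|_{\mathrm{op}}$ is the operator norm.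
   Context: Model class $\Theta$: pairs $(f,g)$, $f:\mathcal X\to\mathbb R^m$, $g:\mathcal Y\to\mathbb R^m$, $\mathcal Y=\{y_1,\dots,y_k\}$, $\sum_y g(y)=0$, inducing $p_{f,g}(y\mid x)\propto\exp(f(x)^\top g(y))$; $p_x$ is the data distribution. Logits $u(x)=L^\top f(x)$, $u'(x)=L'^\top f'(x)$; $d_{\mathrm{logit}}^2=\mathbb E_{x\sim p_x}\|u(x)-u'(x)\|_2^2$. A categorical concept is a map $h:\mathcal X\to\Delta^{C-1}$ (simplex over $C$ values) defining $p_h(c\mid x)=h(x)_c$. It is linearly encoded in $f$ if there exist $w_c\in\mathbb R^m$, $b_c\in\mathbb R$ ($c=1,\dots,C$) with $\exp(w_c^\top f(x)+b_c)/\sum_{j=1}^C\exp(w_j^\top f(x)+b_j)=p_h(c\mid x)$ for all $c$ and $x$; $W$ is the matrix with columns $w_c$ and $b=(b_c)_c$. *)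

(* Defs.v *)
From HB Require Import structures.
From mathcomp Require Import all_boot all_order all_algebra.
From mathcomp Require Import all_classical all_reals all_analysis.
Set Implicit Arguments. Unset Strict Implicit. Unset Printing Implicit Defensive.
Import Order.TTheory GRing.Theory Num.Theory.
Local Open Scope ring_scope.
Local Open Scope classical_set_scope.

Section Defs.
Variable R : realType.

Definition softmax n (z : 'cV[R]_n) : 'cV[R]_n :=
  \col_i (expR (z i 0) / \sum_j expR (z j 0)).

Definition KL n (p q : 'cV[R]_n) : R :=
  \sum_i (if p i 0 == 0 then 0 else p i 0 * ln (p i 0 / q i 0)).

Definition sqnorm n (v : 'cV[R]_n) : R := \sum_i (v i 0) ^+ 2.

Definition norm2 n (v : 'cV[R]_n) : R := Num.sqrt (sqnorm v).

Definition opnorm p q (A : 'M[R]_(p, q)) : R :=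
  sup [set norm2 (A *m v) | v in [set v : 'cV[R]_q | norm2 v <= 1]].

Definition in_simplex C (v : 'cV[R]_C) : Prop :=
  (forall c, 0 <= v c 0) /\ \sum_c v c 0 = 1.

Definition linearly_encoded (X : Type) m C (f : X -> 'cV[R]_m)
  (h : X -> 'cV[R]_C) (W : 'M[R]_(m, C)) (b : 'cV[R]_C) : Prop :=
  forall x c, h x c 0 = softmax (W^T *m f x + b) c 0.

(* the model class Theta: the unembeddings g(y_1),...,g(y_k) (columns of L) sum to 0 *)
Definition centered_unembedding m k (L : 'M[R]_(m, k)) : Prop :=
  \sum_j col j L = 0.

Definition expected_KL d (X : measurableType d) (P : probability X R) m' C
  (h : X -> 'cV[R]_C) (f' : X -> 'cV[R]_m') (W' : 'M[R]_(m', C)) (b' : 'cV[R]_C)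
  : \bar R :=
  (\int[P]_x (KL (h x) (softmax (W'^T *m f' x + b')))%:E)%E.

Definition dlogit2 d (X : measurableType d) (P : probability X R) m m' k
  (f : X -> 'cV[R]_m) (L : 'M[R]_(m, k)) (f' : X -> 'cV[R]_m') (L' : 'M[R]_(m', k))
  : \bar R :=
  (\int[P]_x (sqnorm (L^T *m f x - L'^T *m f' x))%:E)%E.

Definition best_probe_KL d (X : measurableType d) (P : probability X R) m' C
  (h : X -> 'cV[R]_C) (f' : X -> 'cV[R]_m') : \bar R :=
  ereal_inf (range (fun Wb : 'M[R]_(m', C) * 'cV[R]_C =>
                      expected_KL P h f' Wb.1 Wb.2)).
End Defs.

(* Main.v *)
Require Import Defs.
From HB Require Import structures.
From mathcomp Require Import all_boot all_order all_algebra.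
From mathcomp Require Import all_classical all_reals all_analysis.
From mathcomp Require Import ring lra.
Import Order.TTheory GRing.Theory Num.Theory.
Local Open Scope ring_scope.

Section Aux.
Variable R : realType.
Local Set Implicit Arguments. Local Unset Strict Implicit.
Lemma is_derive_pexp (a c x : R) :
  is_derive x 1 (fun t => a * expR (c * t)) (a * c * expR (c * x)).
Proof.
have h1 : is_derive x 1 (c \*: (@id R)) (c *: (1:R)) by apply: is_deriveZ; exact: is_derive_id.
have h2 : is_derive x 1 (expR \o (c \*: (@id R))) (expR (c * x) * (c *: (1:R))).
  by apply: is_derive1_comp.
have h3 := is_deriveZ a h2.
have -> : (fun t => a * expR (c * t)) = a \*: (expR \o (c \*: (@id R))).
  by apply: funext => t.
apply: is_derive_eq h3 _.
rewrite /= scaler1; change (a * (expR (c*x) * c) = a * c * expR (c * x)).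
ring.
Qed.

Lemma isd_der (f : R -> R) (x d : R) : is_derive x (1:R) f d -> derivable f x 1.
Proof. by case. Qed.

Lemma term_le_sum n (F : 'I_n -> R) i : (forall j, 0 <= F j) -> F i <= \sum_j F j.
Proof.
move=> F0; rewrite (bigD1 i) //= lerDl; apply: sumr_ge0 => j _; exact: F0.
Qed.

Lemma core n (p d : 'I_n -> R) : (forall i, 0 <= p i) -> \sum_i p i = 1 ->
  ln (\sum_i p i * expR (d i)) - \sum_i p i * d i <= 2^-1 * \sum_i d i ^+ 2.
Proof.
move=> p0 p1.
set K := \sum_i d i ^+ 2.
set Z := fun t => \sum_i p i * expR (d i * t).
set N := fun t => \sum_i (p i * d i) * expR (d i * t).
set Q := fun t => \sum_i (p i * d i * d i) * expR (d i * t).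
have dZ (x : R) : is_derive x 1 Z (N x).
  have := @is_derive_sum _ _ _ n (fun i t => p i * expR (d i * t)) x 1
     (fun i => p i * d i * expR (d i * x)) (fun i => is_derive_pexp _ _ _).
  by rewrite fct_sumE.
have dN (x : R) : is_derive x 1 N (Q x).
  have := @is_derive_sum _ _ _ n (fun i t => (p i * d i) * expR (d i * t)) x 1
     (fun i => p i * d i * d i * expR (d i * x)) (fun i => is_derive_pexp _ _ _).
  by rewrite fct_sumE.
have [i0 /andP[_ pi0]] : exists i, true && (0 < p i).
  apply: (@psumr_neq0P _ _ _ p) => // ; by rewrite p1; apply/eqP; exact: oner_neq0.
have Zpos t : 0 < Z t.
  rewrite /Z (bigD1 i0) //=; apply: ltr_pwDl.
    by rewrite mulr_gt0 // expR_gt0.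
  by apply: sumr_ge0 => i _; rewrite mulr_ge0 // expR_ge0.
have QK t : Q t <= K * Z t.
  rewrite /Q /Z mulr_sumr; apply: ler_sum => i _.
  rewrite mulrA; apply: ler_wpM2r; first exact: expR_ge0.
  rewrite -mulrA mulrC; apply: ler_wpM2r => //.
  rewrite -expr2 /K; apply: (@term_le_sum n (fun j => d j ^+ 2)) => j.
  exact: sqr_ge0.
have Z0 : Z 0 = 1.
  by rewrite /Z -p1; apply: eq_bigr => i _; rewrite mulr0 expR0 mulr1.
set mu := N 0.
set g := fun t => N t / Z t - K * t.
set D := fun x => Q x / Z x - (N x / Z x) ^+ 2 - K.
have dg (x : R) : is_derive x 1 g (D x).
  have hV := is_deriveV (lt0r_neq0 (Zpos x)) (dZ x).
  have hM := is_deriveM (dN x) hV.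
  have hK : is_derive x 1 (K \*: (@id R)) (K *: (1:R)) by apply: is_deriveZ; exact: is_derive_id.
  have hB := is_deriveB hM hK.
  have -> : g = (N * (fun y => (Z y)^-1)) - (K \*: (@id R)) by apply: funext => t.
  apply: is_derive_eq hB _.
  rewrite /D /= scaler1.
  change (N x * (- (Z x) ^- 2 * N x) + (Z x)^-1 * Q x - K =
          Q x / Z x - (N x / Z x) ^+ 2 - K).
  have := Zpos x; move=> /lt0r_neq0 hz.
  field.
  exact: hz.
have claim1 t : 0 <= t -> g t <= g 0.
  rewrite le_eqVlt => /predU1P[<-|tpos]; first by [].
  have [c _ hc] := MVT tpos (fun x _ => dg x) (derivable_within_continuous (fun y _ => @isd_der _ _ _ (dg y))).
  rewrite -subr_le0 hc; apply: mulr_le0_ge0; last by rewrite subr_ge0 ltW.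

  rewrite /D subr_le0.
  apply: le_trans (_ : Q c / Z c <= K).
    by rewrite lerBlDr lerDl sqr_ge0.
  by rewrite ler_pdivrMr //; exact: QK.
set psi := fun t => ln (Z t) - mu * t - 2^-1 * K * (t ^+ 2).
set E := fun x => N x / Z x - mu - K * x.
have dpsi (x : R) : is_derive x 1 psi (E x).
  have hl : is_derive x 1 (@ln R \o Z) ((Z x)^-1 * N x).
    apply: is_derive1_comp; exact: is_derive1_ln.
  have h1 : is_derive x 1 (mu \*: (@id R)) (mu *: (1:R)) by apply: is_deriveZ; exact: is_derive_id.
  have h2 : is_derive x 1 ((2^-1 * K) \*: ((@id R) ^+ 2)) ((2^-1 * K) *: ((2%:R * x ^+ 1) *: (1:R))).
    by apply: is_deriveZ; apply: is_deriveX; exact: is_derive_id.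
  have hB := is_deriveB (is_deriveB hl h1) h2.
  have -> : psi = (@ln R \o Z) - (mu \*: (@id R)) - ((2^-1 * K) \*: ((@id R) ^+ 2)).
    by apply: funext => t.
  apply: is_derive_eq hB _.
  rewrite /E /= !scaler1.
  change ((Z x)^-1 * N x - mu - (2^-1 * K) * (2 * x) = N x / Z x - mu - K * x).
  field; exact: lt0r_neq0 (Zpos x).
have [c /andP [c0 c1] hc] := MVT ltr01 (fun x _ => dpsi x) (derivable_within_continuous (fun y _ => @isd_der _ _ _ (dpsi y))).
have psi0 : psi 0 = 0 by rewrite /psi Z0 ln1 mulr0 expr0n /= mulr0 !subr0.
have Ec : E c <= 0.
  have := claim1 c (ltW c0); rewrite /g /E mulr0 subr0 Z0 divr1 -/mu.
  move=> h; lra.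
have : psi 1 <= 0 by move: hc; rewrite psi0 !subr0 mulr1 => ->.
rewrite /psi /Z mulr1 expr1n mulr1 subr_le0.
have -> : \sum_i p i * expR (d i * 1) = \sum_i p i * expR (d i).
  by apply: eq_bigr => i _; rewrite mulr1.
have -> : mu = \sum_i p i * d i.
  by rewrite /mu /N; apply: eq_bigr => i _; rewrite mulr0 expR0 mulr1.
by [].
Qed.

Lemma CS2 n (a b : 'I_n -> R) :
  (\sum_i a i * b i) ^+ 2 <= (\sum_i a i ^+ 2) * (\sum_i b i ^+ 2).
Proof.
set Saa := \sum_i a i ^+ 2; set Sab := \sum_i a i * b i; set Sbb := \sum_i b i ^+ 2.
have Saa0 : 0 <= Saa by apply: sumr_ge0 => i _; exact: sqr_ge0.
have Sbb0 : 0 <= Sbb by apply: sumr_ge0 => i _; exact: sqr_ge0.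
have [z|pos] := eqVneq Saa 0.
  have a0 i : a i = 0.
    apply/eqP; rewrite -sqrf_eq0; apply/eqP.
    by apply: (psumr_eq0P _ z) => // j _; exact: sqr_ge0.
  have -> : Sab = 0 by rewrite /Sab big1 // => i _; rewrite a0 mul0r.
  by rewrite expr0n /= z mul0r.
have Sp : 0 < Saa by rewrite lt_neqAle eq_sym pos Saa0.
set t := - Sab / Saa.
have E : \sum_i (t * a i + b i) ^+ 2 = t ^+ 2 * Saa + 2 * t * Sab + Sbb.
  rewrite /Saa /Sab /Sbb !mulr_sumr -!big_split /=; apply: eq_bigr => i _; ring.
have H : 0 <= \sum_i (t * a i + b i) ^+ 2 by apply: sumr_ge0 => i _; exact: sqr_ge0.
rewrite E in H.
have H2 : 0 <= Saa * (t ^+ 2 * Saa + 2 * t * Sab + Sbb) by apply: mulr_ge0.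
have eq : Saa * (t ^+ 2 * Saa + 2 * t * Sab + Sbb) = Saa * Sbb - Sab ^+ 2.
  rewrite /t; field; exact: pos.
rewrite eq in H2.
by rewrite -subr_ge0.
Qed.

Lemma sqnorm_ge0 n (v : 'cV[R]_n) : 0 <= sqnorm v.
Proof. by apply: sumr_ge0 => i _; exact: sqr_ge0. Qed.

Lemma norm2_ge0 n (v : 'cV[R]_n) : 0 <= norm2 v.
Proof. exact: sqrtr_ge0. Qed.

Lemma sqr_norm2 n (v : 'cV[R]_n) : norm2 v ^+ 2 = sqnorm v.
Proof. by rewrite /norm2 sqr_sqrtr // sqnorm_ge0. Qed.

Lemma sqnorm_eq0 n (v : 'cV[R]_n) : sqnorm v = 0 -> v = 0.
Proof.
move=> z; apply/matrixP => i j; rewrite ord1 mxE.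
apply/eqP; rewrite -sqrf_eq0; apply/eqP.
by apply: (psumr_eq0P _ z) => // k _; exact: sqr_ge0.
Qed.

Lemma sqnorm0 n : sqnorm (0 : 'cV[R]_n) = 0.
Proof. by rewrite /sqnorm big1 // => i _; rewrite mxE expr0n. Qed.

Lemma sqnormZ n c (v : 'cV[R]_n) : sqnorm (c *: v) = c ^+ 2 * sqnorm v.
Proof. by rewrite /sqnorm mulr_sumr; apply: eq_bigr => i _; rewrite mxE exprMn. Qed.

Lemma norm2Z n c (v : 'cV[R]_n) : norm2 (c *: v) = `|c| * norm2 v.
Proof. by rewrite /norm2 sqnormZ sqrtrM ?sqr_ge0 // sqrtr_sqr. Qed.

Lemma sqnorm_bound p q (A : 'M[R]_(p, q)) v :
  sqnorm (A *m v) <= (\sum_i \sum_j A i j ^+ 2) * sqnorm v.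
Proof.
rewrite /sqnorm mulr_suml; apply: ler_sum => i _.
rewrite mxE. exact: (CS2 (fun j => A i j) (fun j => v j 0)).
Qed.

Lemma opnorm_ub p q (A : 'M[R]_(p, q)) v : norm2 (A *m v) <= opnorm A * norm2 v.
Proof.
set F := \sum_i \sum_j A i j ^+ 2.
have F0 : 0 <= F by apply: sumr_ge0 => i _; apply: sumr_ge0 => j _; exact: sqr_ge0.
set S := [set norm2 (A *m v) | v in [set v : 'cV[R]_q | norm2 v <= 1]]%classic.
have hub : has_ubound S.
  exists (Num.sqrt F) => _ [w /= hw <-].
  rewrite /norm2 ler_sqrt //.
  apply: le_trans (sqnorm_bound A w) _.
  rewrite -[X in _ <= X]mulr1; apply: ler_wpM2l => //.
  by rewrite -sqr_norm2 -(expr1n _ 2) lerXn2r // ?nnegrE ?norm2_ge0.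
have [z|nz] := eqVneq (norm2 v) 0.
  have : sqnorm v = 0 by rewrite -sqr_norm2 z expr0n.
  by move/sqnorm_eq0 => ->; rewrite mulmx0 /norm2 !sqnorm0 sqrtr0 mulr0.
have sp : 0 < norm2 v by rewrite lt_neqAle eq_sym nz norm2_ge0.
set s := norm2 v.
have hw : norm2 ((s^-1) *: v) <= 1.
  rewrite norm2Z ger0_norm; last by rewrite invr_ge0 ltW.
  by rewrite -/s mulVf // lt0r_neq0.
have hS : S (norm2 (A *m (s^-1 *: v))) by exists (s^-1 *: v).
have := ub_le_sup hub hS.
rewrite -scalemxAr norm2Z ger0_norm; last by rewrite invr_ge0 ltW.
by rewrite -/(opnorm A) ler_pdivrMl // mulrC.
Qed.

Lemma opnorm_tr k C (A : 'M[R]_(k, C)) (w : 'cV[R]_k) :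
  sqnorm (A^T *m w) <= opnorm A ^+ 2 * sqnorm w.
Proof.
set y := A^T *m w.
have id1 : sqnorm y = \sum_i w i 0 * (A *m y) i 0.
  rewrite /sqnorm.
  under [RHS]eq_bigr do rewrite mxE mulr_sumr.
  rewrite exchange_big /=; apply: eq_bigr => j _.
  rewrite expr2 {1}/y mxE mulr_suml; apply: eq_bigr => i _.
  by rewrite mxE; ring.
have h1 : sqnorm y <= norm2 w * norm2 (A *m y).
  rewrite id1; apply: le_trans (ler_norm _) _.
  rewrite -(@ler_pXn2r _ 2) ?nnegrE ?mulr_ge0 ?norm2_ge0 //.
  rewrite real_normK ?num_real // exprMn !sqr_norm2.
  exact: (CS2 (fun i => w i 0) (fun i => (A *m y) i 0)).
have h2 := opnorm_ub A y.
have Y0 := norm2_ge0 y; have W0 := norm2_ge0 w.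
rewrite -!sqr_norm2 in h1 *.
have [z|nz] := eqVneq (norm2 y) 0.
  by rewrite z expr0n /= mulr_ge0 // ?sqr_ge0.
have yp : 0 < norm2 y by rewrite lt_neqAle eq_sym nz.
have h3 : norm2 y <= norm2 w * opnorm A.
  have h4 : norm2 y ^+ 2 <= norm2 w * opnorm A * norm2 y.
    apply: le_trans h1 _; rewrite -mulrA; apply: ler_wpM2l => //.
  by move: h4; rewrite expr2 ler_pM2r.
rewrite -exprMn; rewrite ler_pXn2r ?nnegrE //; first by rewrite mulrC.
by rewrite mulrC; apply: le_trans h3.
Qed.

Lemma core_ge0 n (p d : 'I_n -> R) : (forall i, 0 <= p i) -> \sum_i p i = 1 ->
  \sum_i p i * d i <= ln (\sum_i p i * expR (d i)).
Proof.
move=> p0 p1.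
set mu := \sum_i p i * d i; set S := \sum_i p i * expR (d i).
have hS : expR mu <= S.
  have e1 : \sum_i p i * (expR mu * (1 + (d i - mu))) = expR mu.
    rewrite (eq_bigr (fun i => expR mu * p i + expR mu * (p i * d i) - expR mu * mu * p i)); last first.
      by move=> i _; ring.
    rewrite sumrB big_split /= -!mulr_sumr p1 -/mu; ring.
  rewrite -e1 /S; apply: ler_sum => i _; apply: ler_wpM2l => //.
  have -> : d i = mu + (d i - mu) by ring.
  rewrite expRD; apply: ler_wpM2l; first exact: expR_ge0.
  have -> : mu + (d i - mu) - mu = d i - mu by ring.
  exact: expR_ge1Dx.
have Spos : 0 < S by apply: lt_le_trans hS; exact: expR_gt0.
rewrite -[X in X <= _]expRK ler_ln // ?posrE ?expR_gt0 //.
Qed.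

Lemma softmaxE n (z : 'cV[R]_n) i : softmax z i 0 = expR (z i 0) / \sum_j expR (z j 0).
Proof. by rewrite /softmax mxE. Qed.

Lemma Zsum_pos n (z : 'cV[R]_n) : (0 < n)%N -> 0 < \sum_j expR (z j 0).
Proof.
move=> hn; rewrite (bigD1 (Ordinal hn)) //=; apply: ltr_pwDl; first exact: expR_gt0.
by apply: sumr_ge0 => j _; exact: expR_ge0.
Qed.

Lemma softmax_pos n (z : 'cV[R]_n) i : (0 < n)%N -> 0 < softmax z i 0.
Proof. by move=> hn; rewrite softmaxE divr_gt0 ?expR_gt0 ?Zsum_pos. Qed.

Lemma softmax_sum n (z : 'cV[R]_n) : (0 < n)%N -> \sum_i softmax z i 0 = 1.
Proof.
move=> hn; under eq_bigr do rewrite softmaxE.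
by rewrite -mulr_suml divff // lt0r_neq0 // Zsum_pos.
Qed.

Lemma KL_softmax n (u v : 'cV[R]_n) : (0 < n)%N ->
  0 <= KL (softmax u) (softmax v) /\ KL (softmax u) (softmax v) <= 2^-1 * sqnorm (v - u).
Proof.
move=> hn.
set Zu := \sum_j expR (u j 0); set Zv := \sum_j expR (v j 0).
have Zu0 : 0 < Zu by exact: Zsum_pos.
have Zv0 : 0 < Zv by exact: Zsum_pos.
set p := fun i => softmax u i 0.
set d := fun i => (v - u) i 0.
have p0 i : 0 <= p i by apply: ltW; exact: softmax_pos.
have p1 : \sum_i p i = 1 by exact: softmax_sum.
set S := \sum_i p i * expR (d i).
have SE : S = Zv / Zu.
  rewrite /S /Zv mulr_suml; apply: eq_bigr => i _.
  rewrite /p /d softmaxE !mxE.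
  have -> : v i 0 = u i 0 + (v i 0 - u i 0) by ring.
  rewrite expRD; have -> : u i 0 + (v i 0 - u i 0) - u i 0 = v i 0 - u i 0 by ring.
  by rewrite -/Zu; field; apply: lt0r_neq0.
have Spos : 0 < S by rewrite SE divr_gt0.
have KLE : KL (softmax u) (softmax v) = ln S - \sum_i p i * d i.
  rewrite /KL.
  rewrite (eq_bigr (fun i => p i * ln S - p i * d i)); last first.
    move=> i _; rewrite -/(p i) (gt_eqF (softmax_pos _ _ hn)).
    have -> : p i / softmax v i 0 = S * expR (- d i).
      rewrite SE /p /d !softmaxE !mxE opprB expRD expRN -/Zu -/Zv.
      field; apply/and3P; split; apply: lt0r_neq0 => //; exact: expR_gt0.
    rewrite lnM ?posrE ?expR_gt0 // expRK; ring.
  by rewrite sumrB -mulr_suml p1 mul1r.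
rewrite KLE; split.
  by rewrite subr_ge0; exact: core_ge0.
have := @core n p d p0 p1.
by rewrite -/S.
Qed.
End Aux.

Section Meas.
Local Set Implicit Arguments. Local Unset Strict Implicit.
Context (R : realType) (d : measure_display) (X : measurableType d) (P : probability X R).

Lemma int_mono (f1 f2 : X -> \bar R) : (forall x, (0 <= f1 x)%E) ->
  (forall x, (f1 x <= f2 x)%E) -> (\int[P]_x f1 x <= \int[P]_x f2 x)%E.
Proof.
move=> f10 f12; rewrite !ge0_integralTE //; last by move=> x; apply: le_trans (f12 x).
apply: le_ereal_sup => _ [h hh <-]; exists h => //= x; exact: le_trans (hh x) (f12 x).
Qed.

Lemma meas_entry k m (M : 'M[R]_(k, m)) (g : X -> 'cV[R]_m) :
  (forall i, measurable_fun setT (fun x => g x i 0)) ->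
  forall i, measurable_fun setT (fun x => (M *m g x) i 0).
Proof.
move=> mg i.
rewrite (_ : (fun x => _) = (fun x => \sum_j M i j * g x j 0)); last first.
  by apply: funext => x; rewrite mxE.
apply: measurable_sum => j; apply: measurable_realfun.measurable_funM => //; exact: measurable_cst.
Qed.

Lemma meas_sqnorm k m m' (M : 'M[R]_(k, m)) (M' : 'M[R]_(k, m')) (g : X -> 'cV[R]_m)
  (g' : X -> 'cV[R]_m') :
  (forall i, measurable_fun setT (fun x => g x i 0)) ->
  (forall i, measurable_fun setT (fun x => g' x i 0)) ->
  measurable_fun setT (fun x => sqnorm (M *m g x - M' *m g' x)).
Proof.
move=> mg mg'; rewrite /sqnorm.
apply: measurable_sum => i; apply: measurable_realfun.measurable_funX.
rewrite (_ : (fun x => _) = (fun x => (M *m g x) i 0 + (-1) * (M' *m g' x) i 0)); last first.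
  by apply: funext => x; rewrite !mxE mulN1r.
apply: measurable_realfun.measurable_funD; first exact: meas_entry.
apply: measurable_realfun.measurable_funM; first exact: measurable_cst.
exact: meas_entry.
Qed.
End Meas.

Theorem mainTheorem9 (R : realType) (d : measure_display) (X : measurableType d)
  (P : probability X R) (m m' k C : nat)
  (f : X -> 'cV[R]_m) (L : 'M[R]_(m, k))
  (f' : X -> 'cV[R]_m') (L' : 'M[R]_(m', k))
  (h : X -> 'cV[R]_C) (W : 'M[R]_(m, C)) (b : 'cV[R]_C) (A : 'M[R]_(k, C)) :
  centered_unembedding L -> centered_unembedding L' ->
  (forall i, measurable_fun setT (fun x => f x i 0)) ->
  (forall i, measurable_fun setT (fun x => f' x i 0)) ->
  (forall c, measurable_fun setT (fun x => h x c 0)) ->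
  \rank L = m ->
  (2 <= C)%N ->
  (forall x, in_simplex (h x)) ->
  linearly_encoded f h W b ->
  W = L *m A ->
  (best_probe_KL P h f' <=
     ((2^-1 * opnorm A ^+ 2)%:E * dlogit2 P f L f' L')%E)%E.
Proof.
move=> _ _ mf mf' _ _ hC _ enc WE.
have hn : (0 < C)%N by apply: leq_trans hC.
set c := 2^-1 * opnorm A ^+ 2.
have c0 : 0 <= c by rewrite mulr_ge0 // ?invr_ge0 ?sqr_ge0.
set r := fun x => L^T *m f x - L'^T *m f' x.
have hx x : h x = softmax (W^T *m f x + b).
  by apply/matrixP => i j; rewrite ord1 enc.
have pw x : 0 <= KL (h x) (softmax ((L' *m A)^T *m f' x + b)) /\
    KL (h x) (softmax ((L' *m A)^T *m f' x + b)) <= c * sqnorm (r x).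
  rewrite hx; have [h1 h2] := KL_softmax (W^T *m f x + b) ((L' *m A)^T *m f' x + b) hn.
  split => //; apply: le_trans h2 _.
  have -> : (L' *m A)^T *m f' x + b - (W^T *m f x + b) = A^T *m (- r x).
    rewrite WE !trmx_mul -!mulmxA mulmxN mulmxBr /r; by rewrite opprB opprD addrACA subrr addr0.
  rewrite /c -mulrA; apply: ler_wpM2l; first by rewrite invr_ge0.
  apply: le_trans (opnorm_tr A (- r x)) _.
  have -> : sqnorm (- r x) = sqnorm (r x).
    by rewrite /sqnorm; apply: eq_bigr => i _; rewrite mxE sqrrN.
  by [].
apply: (@le_trans _ _ (expected_KL P h f' (L' *m A) b)).
  apply: ge_ereal_inf; exists (expected_KL P h f' (L' *m A) b); last exact: lexx.
  by exists (L' *m A, b).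
rewrite /expected_KL /dlogit2.
rewrite -ge0_integralZl_EFin //; last 2 first.
- by move=> x _; rewrite lee_fin sqnorm_ge0.
- by apply/measurable_realfun.measurable_EFinP; exact: meas_sqnorm.
apply: int_mono => x; first by rewrite lee_fin; case: (pw x).
by rewrite -EFinM lee_fin; case: (pw x).
Qed.
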